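(* Let $\Theta$ be a q$\L^{*}$-theory. Then $[\Theta]_\sim=\{[p]_\sim\in [F(V)]_\sim: p\in \Theta\}$ is a filter of the MV*-algebra $\langle [F(V)]_\sim;\oplus, -, [0]_\sim, [1]_\sim \rangle$.
   Context: Let $V=\{p_1,p_2,\ldots\}$ be a set of propositional variables and $F(V)$ the set of formulas built from $V$ with connectives $\to$, $\neg$, $^{+}$, $^{-}$ and constant $1$; $p\leftrightarrow q$ abbreviates ''$p\to q$ and $q\to p$'', and $p\vee q = ((p^{+}\to q^{+})^{+}\to(\neg p)^{-})\to((q^{-}\to p^{-})^{-}\to p^{-})$. The logic q$\L^{*}$ has axiom schemas: (Q1) $(p\to q)\leftrightarrow (\neg q\to \neg p)$; (Q2) $1\leftrightarrow ((1\to p)\to 1)$; (Q3) $p\leftrightarrow ((q\to q)\to p)$; (Q4) $(p\to q)\leftrightarrow((q^{+}\to p^{-})\to (p^{+}\to q^{-}))$; (Q5) $\neg(p\to q)\leftrightarrow (q\to p)$; (Q6) $(p\to (\neg p\to q))^+\leftrightarrow (p^+\to (\neg p^+\to q^+))$; (Q7) $(p\to (q\vee r))\leftrightarrow((p\to r)\vee (p\to q))$; (Q8) $(p\vee (q\vee r))\leftrightarrow ((p\vee q)\vee r)$; (Q9) $((p\to 1)\to((q\to 1)\to r))\to ((q\to 1)\to((p\to 1)\to r))$; (Q10) $p\to 1$; (Q11) $(1\to 1)\to p^{+}\leftrightarrow(p\to 1)\to 1$ and $(1\to 1)\to p^{-}\leftrightarrow(p\to \neg 1)\to \neg 1$; and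 deduction rules (R1) $p, p\to q\vdash (r\to r)\to q$; (R2) $(r\to r)\to(p\to q)\vdash p\to q$; (R3) $p\to q, r\to t\vdash (q\to r)\to (p\to t)$. Provability $\vdash$ and $\Gamma\vdash$ (proofs using axioms, members of $\Gamma$ and the rules) are defined as usual; $\Gamma^{\vdash}$ is the set of formulas provable from $\Gamma$, and a q$\L^{*}$-theory is a set $\Theta\subseteq F(V)$ with $\Theta^{\vdash}=\Theta$. The relation $p\sim q$ iff $\vdash p\leftrightarrow q$ is a congruence on $F(V)$ with respect to $\to,\neg,^{+},^{-}$; $[p]_\sim$ denotes the class of $p$ and $[F(V)]_\sim$ the set of classes, with $\neg[p]_\sim=[\neg p]_\sim$, $[p]_\sim\to[q]_\sim=[p\to q]_\sim$, $([p]_\sim)^{\pm}=[p^{\pm}]_\sim$. Define $-[p]_\sim=\neg[p]_\sim$, $[p]_\sim\oplus[q]_\sim=\neg[p]_\sim\to[q]_\sim$ and $[0]_\sim=[p\to p]_\sim$; then $\langle [F(V)]_\sim;\oplus,-,[0]_\sim,[1]_\sim\rangle$ is an MV*-algebra. For an MV*-algebra $\mathbf{M}$ with $x^{+}=1\oplus(-1\oplus x)$ and $y\ominus x=y\oplus(-x)$, a subset $F\subseteq M$ is a filter if (F1) $M^+=\{x^+:x\in M\}\subseteq F$; (F2) if $x\in F$ and $y\ominus x\in F$ then $y\in F$; (F3) if $x\oplus y\in F$ and $t\in M$ then $(x\oplus t)\oplus(y\ominus t)\in F$. *)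

(* Defs.v *)
From Stdlib Require Import ClassicalEpsilon.

Inductive form : Type :=
  | Var : nat -> form
  | Imp : form -> form -> form
  | Neg : form -> form
  | Pl  : form -> form
  | Mi  : form -> form
  | One : form.

Definition Or (p q : form) : form :=
  Imp (Imp (Pl (Imp (Pl p) (Pl q))) (Mi (Neg p)))
      (Imp (Mi (Imp (Mi q) (Mi p))) (Mi p)).

(* "a <-> b" abbreviates the two formulas a -> b and b -> a;
   an axiom schema "a <-> b" thus contributes both. *)
Definition iffax (a b x : form) : Prop := x = Imp a b \/ x = Imp b a.

Inductive axiom : form -> Prop :=
  | Q1 p q x : iffax (Imp p q) (Imp (Neg q) (Neg p)) x -> axiom x
  | Q2 p x : iffax One (Imp (Imp One p) One) x -> axiom x
  | Q3 p q x : iffax p (Imp (Imp q q) p) x -> axiom x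
  | Q4 p q x : iffax (Imp p q) (Imp (Imp (Pl q) (Mi p)) (Imp (Pl p) (Mi q))) x -> axiom x
  | Q5 p q x : iffax (Neg (Imp p q)) (Imp q p) x -> axiom x
  | Q6 p q x : iffax (Pl (Imp p (Imp (Neg p) q)))
                     (Imp (Pl p) (Imp (Neg (Pl p)) (Pl q))) x -> axiom x
  | Q7 p q r x : iffax (Imp p (Or q r)) (Or (Imp p r) (Imp p q)) x -> axiom x
  | Q8 p q r x : iffax (Or p (Or q r)) (Or (Or p q) r) x -> axiom x
  | Q9 p q r : axiom (Imp (Imp (Imp p One) (Imp (Imp q One) r))
                          (Imp (Imp q One) (Imp (Imp p One) r)))
  | Q10 p : axiom (Imp p One)
  | Q11a p x : iffax (Imp (Imp One One) (Pl p)) (Imp (Imp p One) One) x -> axiom x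
  | Q11b p x : iffax (Imp (Imp One One) (Mi p))
                     (Imp (Imp p (Neg One)) (Neg One)) x -> axiom x.

Inductive derivable (Gamma : form -> Prop) : form -> Prop :=
  | D_ax p : axiom p -> derivable Gamma p
  | D_hyp p : Gamma p -> derivable Gamma p
  | R1 p q r : derivable Gamma p -> derivable Gamma (Imp p q) ->
               derivable Gamma (Imp (Imp r r) q)
  | R2 p q r : derivable Gamma (Imp (Imp r r) (Imp p q)) ->
               derivable Gamma (Imp p q)
  | R3 p q r t : derivable Gamma (Imp p q) -> derivable Gamma (Imp r t) ->
                 derivable Gamma (Imp (Imp q r) (Imp p t)).

Definition provable (p : form) : Prop := derivable (fun _ => False) p.

Definition theory (Theta : form -> Prop) : Prop :=
  forall p, derivable Theta p <-> Theta p.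

Definition sim (p q : form) : Prop := provable (Imp p q) /\ provable (Imp q p).

Definition cls (p : form) : form -> Prop := fun q => sim p q.
Definition Quot : Type := { X : form -> Prop | exists p, X = cls p }.
Definition qcls (p : form) : Quot := exist _ (cls p) (ex_intro _ p eq_refl).
Definition rep (X : Quot) : form :=
  proj1_sig (constructive_indefinite_description _ (proj2_sig X)).

(* MV*-operations on [F(V)]_~ (well defined since ~ is a congruence) *)
Definition qneg (X : Quot) : Quot := qcls (Neg (rep X)).
Definition qoplus (X Y : Quot) : Quot := qcls (Imp (Neg (rep X)) (rep Y)).
Definition qone : Quot := qcls One.
Definition qzero : Quot := qcls (Imp (Var 0) (Var 0)).

Definition is_filter {M : Type} (oplus : M -> M -> M) (neg : M -> M) (one : M)
    (F : M -> Prop) : Prop :=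
  let plus x := oplus one (oplus (neg one) x) in
  let ominus y x := oplus y (neg x) in
  (forall x, F (plus x)) /\
  (forall x y, F x -> F (ominus y x) -> F y) /\
  (forall x y t, F (oplus x y) -> F (oplus (oplus x t) (ominus y t))).

Definition qset (Theta : form -> Prop) : Quot -> Prop :=
  fun X => exists p, Theta p /\ X = qcls p.

(* Main.v *)
Require Import Defs.
From Stdlib Require Import ClassicalEpsilon ProofIrrelevance FunctionalExtensionality PropExtensionality.

Section S.
Variable G : form -> Prop.

Lemma ax G' p : axiom p -> derivable G' p.
Proof. intros; now apply D_ax. Qed.

Lemma mp_imp a b c : derivable G a -> derivable G (Imp a (Imp b c)) -> derivable G (Imp b c).
Proof. intros H1 H2. apply (R2 _ _ _ One). exact (R1 _ a _ One H1 H2). Qed.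

Lemma drefl c : derivable G (Imp c c).
Proof.
  set (X := Imp (Imp One One) c). set (Y := Imp (Imp One One) X).
  assert (HY : derivable G (Imp Y Y)) by (apply ax; apply (Q9 One One c)).
  assert (HXY : derivable G (Imp X Y)) by (apply ax; apply (Q3 X One); left; reflexivity).
  assert (HYX : derivable G (Imp Y X)) by (apply ax; apply (Q3 X One); right; reflexivity).
  assert (HX : derivable G (Imp X X)).
  { eapply mp_imp. exact HY. apply R3; assumption. }
  assert (HcX : derivable G (Imp c X)) by (apply ax; apply (Q3 c One); left; reflexivity).
  assert (HXc : derivable G (Imp X c)) by (apply ax; apply (Q3 c One); right; reflexivity).
  eapply mp_imp. exact HX. apply R3; assumption.
Qed.

Lemma dtrans a b c : derivable G (Imp a b) -> derivable G (Imp b c) -> derivable G (Imp a c).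
Proof. intros H1 H2. eapply mp_imp. exact H2. apply R3. exact H1. apply drefl. Qed.

Lemma dneg a b : derivable G (Imp a b) -> derivable G (Imp (Neg b) (Neg a)).
Proof. intros H. eapply mp_imp. exact H. apply ax; apply (Q1 a b); left; reflexivity. Qed.

End S.

Lemma mono G p : provable p -> derivable G p.
Proof.
  unfold provable. intro H; induction H.
  - now apply D_ax.
  - contradiction.
  - exact (R1 _ _ _ _ IHderivable1 IHderivable2).
  - exact (R2 _ _ _ _ IHderivable).
  - apply R3; auto.
Qed.

Lemma sim_refl a : sim a a.
Proof. split; apply drefl. Qed.
Lemma sim_sym a b : sim a b -> sim b a.
Proof. intros [? ?]; split; auto. Qed.
Lemma sim_trans a b c : sim a b -> sim b c -> sim a c.
Proof. intros [? ?] [? ?]; split; eapply dtrans; eauto. Qed.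
Lemma sim_neg a b : sim a b -> sim (Neg a) (Neg b).
Proof. intros [? ?]; split; apply dneg; auto. Qed.
Lemma sim_imp a b c d : sim a b -> sim c d -> sim (Imp a c) (Imp b d).
Proof. intros [? ?] [? ?]; split; apply R3; auto. Qed.
Lemma sim_ax a b : axiom (Imp a b) -> axiom (Imp b a) -> sim a b.
Proof. intros; split; apply D_ax; auto. Qed.

Lemma exist_eq (A : Type) (P : A -> Prop) x y (px : P x) (py : P y) :
  x = y -> exist P x px = exist P y py.
Proof. intros; subst; f_equal; apply proof_irrelevance. Qed.

Lemma qcls_eq a b : sim a b -> qcls a = qcls b.
Proof.
  intro H. unfold qcls. apply exist_eq. unfold cls.
  apply functional_extensionality; intro q. apply propositional_extensionality.
  split; intro H'; eapply sim_trans; eauto using sim_sym.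
Qed.

Lemma qcls_inv a b : qcls a = qcls b -> sim a b.
Proof.
  intro H. assert (E : cls a = cls b) by (apply (f_equal (@proj1_sig _ _)) in H; exact H).
  assert (cls b b) by apply sim_refl. rewrite <- E in H0. exact H0.
Qed.

Lemma rep_spec X : proj1_sig X = cls (rep X).
Proof. unfold rep. destruct (constructive_indefinite_description _ _). simpl. exact e. Qed.

Lemma qcls_rep X : qcls (rep X) = X.
Proof.
  destruct X as [S HS]. pose proof (rep_spec (exist _ S HS)) as E. simpl in E.
  unfold qcls. apply exist_eq. symmetry; exact E.
Qed.

Lemma rep_qcls p : sim (rep (qcls p)) p.
Proof. apply qcls_inv. apply qcls_rep. Qed.

Lemma qneg_cls a : qneg (qcls a) = qcls (Neg a).
Proof. unfold qneg. apply qcls_eq, sim_neg, rep_qcls. Qed.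

Lemma qoplus_cls a b : qoplus (qcls a) (qcls b) = qcls (Imp (Neg a) b).
Proof. unfold qoplus. apply qcls_eq, sim_imp. apply sim_neg, rep_qcls. apply rep_qcls. Qed.

Lemma nn1 : sim (Neg (Neg One)) One.
Proof.
  assert (H1 : sim One (Imp (Imp One One) One)) by (apply sim_ax; apply (Q3 One One); [left|right]; reflexivity).
  assert (H2 : sim (Neg One) (Imp One (Imp One One))).
  { eapply sim_trans. apply sim_neg, H1.
    apply sim_ax; apply (Q5 (Imp One One) One); [left|right]; reflexivity. }
  eapply sim_trans. apply sim_neg, H2.
  eapply sim_trans. apply sim_ax; apply (Q5 One (Imp One One)); [left|right]; reflexivity.
  apply sim_sym, H1.
Qed.

Theorem proposition4p5 (Theta : form -> Prop) :
  theory Theta -> is_filter qoplus qneg qone (qset Theta).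
Proof.
  intros HT. unfold is_filter. split; [|split].
  - intro x. rewrite <- (qcls_rep x). set (x' := rep x). unfold qone.
    rewrite qneg_cls, !qoplus_cls.
    exists (Imp (Imp x' One) One). split.
    + apply HT. apply D_ax. apply Q10.
    + apply qcls_eq.
      eapply sim_trans. apply sim_imp. apply sim_refl. apply sim_imp. apply nn1. apply sim_refl.
      eapply sim_trans. apply sim_ax; apply (Q1 (Neg One) (Imp One x')); [left|right]; reflexivity.
      apply sim_imp. apply sim_ax; apply (Q5 One x'); [left|right]; reflexivity.
      apply nn1.
  - intros x y [p [Hp ->]] [s [Hs E]].
    rewrite <- (qcls_rep y) in *. set (y' := rep y) in *.
    rewrite qneg_cls, qoplus_cls in E. apply qcls_inv in E. destruct E as [_ E].
    assert (D1 : derivable Theta (Imp (Neg y') (Neg p))).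
    { apply (mp_imp _ s). now apply D_hyp. apply mono, E. }
    assert (D2 : derivable Theta (Imp p y')).
    { eapply mp_imp. exact D1. apply D_ax; apply (Q1 p y'); right; reflexivity. }
    exists (Imp (Imp One One) y'). split.
    + apply HT. eapply R1. apply D_hyp, Hp. exact D2.
    + apply qcls_eq. apply sim_ax; apply (Q3 y' One); [left|right]; reflexivity.
  - intros x y t [s [Hs E]].
    rewrite <- (qcls_rep x), <- (qcls_rep y), <- (qcls_rep t) in *.
    set (x' := rep x) in *. set (y' := rep y) in *. set (t' := rep t) in *.
    rewrite qoplus_cls in E. apply qcls_inv in E. destruct E as [_ E].
    rewrite qneg_cls, !qoplus_cls.
    eexists; split; [|reflexivity]. apply HT.
    assert (D1 : derivable Theta (Imp (Neg x') y')).
    { apply (mp_imp _ s). now apply D_hyp. apply mono, E. }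
    assert (D2 : derivable Theta (Imp (Imp t' (Neg x')) (Imp t' y'))).
    { apply R3. apply drefl. exact D1. }
    eapply mp_imp. exact D2. apply R3.
    + apply D_ax; apply (Q5 (Neg x') t'); left; reflexivity.
    + apply D_ax; apply (Q1 t' y'); left; reflexivity.
Qed.
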